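(* (a) Every Steiner triple system on $9$ points of $3$-rank at most $8$ is resolvable. (b) Let $S$ be a Steiner triple system on $27$ points of $3$-rank at most $25$, with a decomposition into three groups $G_1,G_2,G_3$ of size $9$, three $STS(9)$'s on $G_1,G_2,G_3$, and one transversal design $TD[3;9]$ on $G_1,G_2,G_3$ (as in the context). If the Latin square of order $9$ corresponding to this transversal design has an orthogonal mate, then $S$ is resolvable; its blocks partition into $13$ parallel classes.
   Context: A Steiner triple system $STS(v)$ is a pair $(\mathcal{P},\mathcal{B})$ with $|\mathcal{P}|=v$ and $\mathcal{B}$ a set of $3$-subsets (blocks) such that every $2$-subset lies in exactly one block. Its $3$-rank is the rank over $\mathbb{F}_3$ of its block–point incidence matrix. A parallel class is a set of blocks partitioning the point set; the system is resolvable if its blocks can be partitioned into parallel classes. A transversal design $TD[3;T]$ on disjoint groups $H_1,H_2,H_3$ of size $T$ is a set of $T^2$ triples meeting each group once such that each pair of points from distinct groups lies in exactly one triple; equivalently a Latin square of order $T$ (rows $H_1$, columns $H_2$, symbols $H_3$). Two Latin squares of order $n$ are orthogonal if superimposing them yields every ordered pair of symbols exactly once; an orthogonal mate is a Latin square orthogonal to the given one. By the cited structure theorem (Jungnickel et al.), an $STS(27)$ of $3$-rank at most $25$ has its point set partitioned into three groups of size $9$ such that its blocks split into an $STS(9)$ on each group together with a $TD[3;9]$ on the three groups. *)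

(* Defs.v *)
From HB Require Import structures.
From mathcomp Require Import all_boot all_order all_algebra all_fingroup.
Set Implicit Arguments. Unset Strict Implicit. Unset Printing Implicit Defensive.
Import GRing.Theory.

Section Designs.
Variable T : finType.

Definition sts_on (P : {set T}) (B : {set {set T}}) : Prop :=
  (forall b, b \in B -> b \subset P /\ #|b| = 3) /\
  (forall x y, x \in P -> y \in P -> x != y ->
     #|[set b in B | (x \in b) && (y \in b)]| = 1).

Definition parallel_class (B P : {set {set T}}) : Prop :=
  P \subset B /\ partition P [set: T].

Definition resolution (B : {set {set T}}) (R : {set {set {set T}}}) : Prop :=
  partition R B /\ (forall P, P \in R -> parallel_class B P).

Definition resolvable (B : {set {set T}}) : Prop := exists R, resolution B R.

(* the third point of the block through x and y (x is a dummy default) *)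
Definition third (B : {set {set T}}) (x y : T) : T :=
  odflt x [pick z | [&& z != x, z != y & [set x; y; z] \in B]].

Definition latin_on (U : finType) (Rw C : {set T}) (S : {set U}) (L : T -> T -> U) : Prop :=
  [/\ #|Rw| = #|C|, #|C| = #|S|,
      (forall x y, x \in Rw -> y \in C -> L x y \in S),
      (forall x, x \in Rw -> {in C &, injective (L x)}) &
      (forall y, y \in C -> {in Rw &, injective (fun x => L x y)})].

Definition orthogonal_on (U V : finType) (Rw C : {set T})
    (L : T -> T -> U) (M : T -> T -> V) : Prop :=
  {in setX Rw C &, injective (fun p : T * T => (L p.1 p.2, M p.1 p.2))}.

End Designs.

Definition incmx (v : nat) (B : {set {set 'I_v}}) : 'M['F_3]_(#|B|, v) :=
  \matrix_(i < #|B|, j < v) (if j \in (enum_val i : {set 'I_v}) then 1%R else 0%R).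

Definition rank3 (v : nat) (B : {set {set 'I_v}}) : nat := \rank (incmx B).

(* Main.v *)
Require Import Defs.
From HB Require Import structures.
From mathcomp Require Import all_boot all_order all_algebra all_fingroup.
Set Implicit Arguments. Unset Strict Implicit. Unset Printing Implicit Defensive.

Lemma card1_intro (T : finType) (A : {set T}) x :
  x \in A -> (forall y, y \in A -> y = x) -> #|A| = 1.
Proof.
move=> xA H; have -> : A = [set x]; last by rewrite cards1.
by apply/setP=> y; rewrite inE; apply/idP/eqP=> [/H|->].
Qed.

Lemma card1_uniq (T : finType) (A : {set T}) x y :
  #|A| = 1 -> x \in A -> y \in A -> x = y.
Proof.
by move/eqP/cards1P=> [a ->]; rewrite !inE => /eqP-> /eqP->.
Qed.

Lemma card1_ex (T : finType) (A : {set T}) : #|A| = 1 -> exists x, x \in A.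
Proof. by move/eqP/cards1P=> [a ->]; exists a; rewrite inE. Qed.

Lemma disjF (T : finType) (A B : {set T}) x :
  [disjoint A & B] -> x \in A -> x \in B -> False.
Proof. by move=> d xA; rewrite (disjointFr d xA). Qed.

Section STS9.
Variables (T : finType) (P : {set T}) (B : {set {set T}}).
Hypothesis HB : sts_on P B.
Hypothesis HP : #|P| = 9.

Lemma blk_sub b : b \in B -> b \subset P.
Proof. by case: HB => H _ /H []. Qed.

Lemma blk_card b : b \in B -> #|b| = 3.
Proof. by case: HB => H _ /H []. Qed.

Lemma blk_ex x y : x \in P -> y \in P -> x != y ->
  exists b, [/\ b \in B, x \in b & y \in b].
Proof.
case: HB => _ H xP yP xy; have [b] := card1_ex (H _ _ xP yP xy).
by rewrite inE => /andP [bB /andP [xb yb]]; exists b.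
Qed.

Lemma blk_uniq x y b c : x != y -> b \in B -> c \in B ->
  x \in b -> y \in b -> x \in c -> y \in c -> b = c.
Proof.
move=> xy bB cB xb yb xc yc; case: HB => _ H.
have xP : x \in P by apply: (subsetP (blk_sub bB)).
have yP : y \in P by apply: (subsetP (blk_sub bB)).
by apply: (card1_uniq (H _ _ xP yP xy)); rewrite inE ?bB ?cB ?xb ?yb ?xc ?yc.
Qed.

Definition S x := [set b in B | x \in b].

Lemma card_S x : x \in P -> #|S x| = 4.
Proof.
move=> xP.
pose Fam := [set b :\ x | b in S x].
have cb : forall b, b \in S x -> #|b :\ x| = 2.
  move=> b; rewrite inE => /andP [bB xb].
  by have := cardsD1 x b; rewrite xb blk_card // => -[].
have part : partition Fam (P :\ x).
  apply/and3P; split.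
  - apply/eqP/setP=> y; apply/bigcupP/idP.
      move=> [A /imsetP [b bS ->]]; rewrite !inE => /andP [-> yb] /=.
      move: bS; rewrite inE => /andP [bB _].
      by apply: (subsetP (blk_sub bB)).
    rewrite !inE => /andP [yx yP].
    have xy : x != y by rewrite eq_sym.
    have [b [bB xb yb]] := blk_ex xP yP xy.
    exists (b :\ x); last by rewrite !inE yx.
    by apply/imsetP; exists b; rewrite // inE bB xb.
  - apply/trivIsetP=> A1 A2 /imsetP [b bS ->] /imsetP [c cS ->] ne.
    rewrite -setI_eq0; apply/set0Pn=> -[y]; rewrite !inE => /and3P [/andP [yx yb] _ yc].
    move: bS cS ne; rewrite !inE => /andP [bB xb] /andP [cB xc].
    by rewrite (blk_uniq (x:=x) (y:=y) _ bB cB) ?eqxx // eq_sym.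
  - apply/imsetP=> -[b bS] e; have := cb _ bS; by rewrite -e cards0.
have := card_partition part.
rewrite (eq_bigr (fun _ => 2)); last first.
  by move=> A /imsetP [b bS ->]; apply: cb.
rewrite sum_nat_const card_in_imset.
  have := cardsD1 x P; rewrite xP HP add1n => -[<-] H.
  by apply/eqP; rewrite -(eqn_pmul2r (_ : 0 < 2)) // -H.
move=> b c; rewrite !inE => /andP [_ xb] /andP [_ xc] e.
by rewrite -(setD1K xb) -(setD1K xc) e.
Qed.

Definition blk x y := odflt set0 [pick c in B | (x \in c) && (y \in c)].

Lemma blkP x y : x \in P -> y \in P -> x != y ->
  [/\ blk x y \in B, x \in blk x y & y \in blk x y].
Proof.
move=> xP yP xy; rewrite /blk; case: pickP => [c /andP [cB /andP [xc yc]] //|].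
by have [b [bB xb yb]] := blk_ex xP yP xy => /(_ b); rewrite bB xb yb.
Qed.

Lemma blk_eq x y c : x != y -> c \in B -> x \in c -> y \in c -> blk x y = c.
Proof.
move=> xy cB xc yc.
have xP : x \in P by apply: (subsetP (blk_sub cB)).
have yP : y \in P by apply: (subsetP (blk_sub cB)).
have [bB xb yb] := blkP xP yP xy.
exact: (blk_uniq xy bB cB).
Qed.

Lemma par_ax b x : b \in B -> x \in P -> x \notin b ->
  #|[set c in B | (x \in c) && [disjoint c & b]]| = 1.
Proof.
move=> bB xP xb.
pose F := [set c in S x | ~~ [disjoint c & b]].
have xy : forall y, y \in b -> x != y.
  by move=> y yb; apply/eqP=> e; move: xb; rewrite e yb.
have yP : forall y, y \in b -> y \in P by move=> y; apply: (subsetP (blk_sub bB)).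
have eF : F = [set blk x y | y in b].
  apply/setP=> c; apply/idP/imsetP.
    rewrite !inE => /andP [/andP [cB xc]]; rewrite -setI_eq0 => /set0Pn [y].
    rewrite inE => /andP [yc yb]; exists y => //.
    by rewrite (blk_eq (xy _ yb) cB xc yc).
  move=> [y yb ->]; have [cB xc yc] := blkP xP (yP _ yb) (xy _ yb).
  rewrite !inE cB xc /= -setI_eq0; apply/set0Pn; exists y; by rewrite inE yc.
have cF : #|F| = 3.
  rewrite eF card_in_imset ?blk_card //.
  move=> y1 y2 y1b y2b e; apply/eqP; apply/negPn/negP=> ne.
  have [cB xc y1c] := blkP xP (yP _ y1b) (xy _ y1b).
  have [_ _ y2c] := blkP xP (yP _ y2b) (xy _ y2b).
  rewrite -e in y2c.
  have := blk_uniq ne cB bB y1c y2c y1b y2b; move=> ecb.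
  by move: xb; rewrite -ecb xc.
have FS : F \subset S x by apply/subsetP=> c; rewrite inE => /andP [].
have := cardsID F (S x); rewrite (setIidPr FS) cF card_S // => H.
have -> : [set c in B | (x \in c) && [disjoint c & b]] = S x :\: F.
  by apply/setP=> c; rewrite !inE; case: (c \in B); case: (x \in c); case: [disjoint c & b].
by move: H; rewrite -[4]/(3 + 1) => /eqP; rewrite eqn_add2l => /eqP.
Qed.

Definition Cls b := [set c in B | (c == b) || [disjoint c & b]].

Lemma Cls_refl b : b \in B -> b \in Cls b.
Proof. by move=> bB; rewrite inE bB eqxx. Qed.

Lemma Cls_pc b z : b \in B -> z \in P -> #|[set c in Cls b | z \in c]| = 1.
Proof.
move=> bB zP; case zb: (z \in b).
  apply: (card1_intro (x:=b)); first by rewrite inE Cls_refl.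
  move=> c; rewrite !inE => /andP [/andP [cB /orP [/eqP //|d]] zc].
  by case: (disjF d zc zb).
rewrite -(par_ax bB zP (negbT zb)); apply: eq_card => c.
rewrite !inE; case cB: (c \in B) => //=; case zc: (z \in c); rewrite ?andbF //=.
rewrite andbT; case: eqP => //= e; by move: zb; rewrite -e zc.
Qed.

Lemma Cls_in b c : b \in B -> c \in Cls b -> Cls c = Cls b.
Proof.
move=> bB cCb.
have cB : c \in B by move: cCb; rewrite inE => /andP [].
have sub : Cls b \subset Cls c.
  apply/subsetP=> d dCb; have dB : d \in B by move: dCb; rewrite inE => /andP [].
  rewrite inE dB /=; case: eqP => //= ne; rewrite -setI_eq0; apply/set0Pn => -[y].
  rewrite inE => /andP [yd yc].
  have yP : y \in P by apply: (subsetP (blk_sub dB)).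
  by apply: ne; apply: (card1_uniq (Cls_pc bB yP)); rewrite inE ?dCb ?cCb ?yd ?yc.
apply/eqP; rewrite eqEsubset sub andbT; apply/subsetP=> d dCc.
have dB : d \in B by move: dCc; rewrite inE => /andP [].
have : (0 < #|d|) by rewrite blk_card.
rewrite card_gt0 => /set0Pn [y yd].
have yP : y \in P by apply: (subsetP (blk_sub dB)).
have [e] := card1_ex (Cls_pc bB yP); rewrite inE => /andP [eCb ye].
have eCc : e \in Cls c by apply: (subsetP sub).
have -> // : d = e.
by apply: (card1_uniq (Cls_pc cB yP)); rewrite inE ?dCc ?eCc ?yd ?ye.
Qed.

Definition Rs := [set Cls b | b in B].

Lemma card_Rs : #|Rs| = 4.
Proof.
have : 0 < #|P| by rewrite HP.
rewrite card_gt0 => /set0Pn [x0 x0P].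
have -> : Rs = [set Cls c | c in S x0].
  apply/setP=> K; apply/imsetP/imsetP=> -[b bB ->].
    have [c] := card1_ex (Cls_pc bB x0P); rewrite inE => /andP [cCb x0c].
    have cB : c \in B by move: cCb; rewrite inE => /andP [].
    by exists c; rewrite ?inE ?cB ?x0c // (Cls_in bB cCb).
  by exists b => //; move: bB; rewrite inE => /andP [].
rewrite card_in_imset ?card_S //.
move=> c c'; rewrite !inE => /andP [cB x0c] /andP [c'B x0c'] e.
apply: (card1_uniq (Cls_pc cB x0P)); rewrite inE ?Cls_refl ?x0c //.
by rewrite e Cls_refl.
Qed.

Lemma sts9_label : exists f : {set T} -> 'I_4,
  forall k z, z \in P -> #|[set c in B | (f c == k) && (z \in c)]| = 1.
Proof.
pose e := enum Rs.
have se : size e = 4 by rewrite -cardE card_Rs.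
exists (fun c => inord (index (Cls c) e)) => k z zP.
have kl : k < size e by rewrite se.
have : nth set0 e k \in Rs by rewrite -mem_enum; apply: mem_nth.
move=> /imsetP [b0 bB e0].
apply: (etrans _ (Cls_pc bB zP)); apply: eq_card => c; rewrite !inE.
case cB: (c \in B) => //=.
have key : (c \in Cls b0) = ((c == b0) || [disjoint c & b0]) by rewrite inE cB.
rewrite -key; congr (_ && _).
have ce : Cls c \in e by rewrite mem_enum; apply/imsetP; exists c.
have il : index (Cls c) e < 4 by rewrite -se index_mem.
apply/eqP/idP.
  move/(congr1 val); rewrite /= inordK // => ei.
  have : nth set0 e (index (Cls c) e) = nth set0 e k by rewrite ei.
  rewrite nth_index // e0 => <-; exact: Cls_refl.
move=> cCb; apply: val_inj; rewrite /= inordK //.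
by rewrite (Cls_in bB cCb) -e0 index_uniq // enum_uniq.
Qed.
End STS9.
Lemma res_of_label (T : finType) (B : {set {set T}}) n (f : {set T} -> 'I_n) (x0 : T) :
  (forall b, b \in B -> b != set0) ->
  (forall k x, #|[set c in B | (f c == k) && (x \in c)]| = 1) ->
  resolution B [set [set c in B | f c == k] | k : 'I_n] /\
  #|[set [set c in B | f c == k] | k : 'I_n]| = n.
Proof.
move=> ne H.
have ex : forall k, exists c, [/\ c \in B, f c = k & x0 \in c].
  move=> k; have [c] := card1_ex (H k x0); rewrite inE => /andP [cB /andP [/eqP fc xc]].
  by exists c.
have inj : injective (fun k => [set c in B | f c == k]).
  move=> k1 k2 e; have [c [cB fc xc]] := ex k1.
  have : c \in [set c in B | f c == k1] by rewrite inE cB fc eqxx.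
  by rewrite e inE => /andP [_ /eqP <-].
split; last by rewrite card_imset // card_ord.
split.
  apply/and3P; split.
  - apply/eqP/setP=> c; apply/bigcupP/idP.
      by move=> [Q /imsetP [k _ ->]]; rewrite inE => /andP [].
    move=> cB; pose k := f c; exists [set d in B | f d == k]; first by apply/imsetP; exists k.
    by rewrite inE cB eqxx.
  - apply/trivIsetP=> Q1 Q2 /imsetP [k1 _ ->] /imsetP [k2 _ ->] neq.
    rewrite -setI_eq0; apply/set0Pn=> -[c]; rewrite !inE => /andP [/andP [_ /eqP e1] /andP [_ /eqP e2]].
    by move: neq; rewrite -e1 -e2 eqxx.
  - apply/imsetP=> -[k _ e]; have [c [cB fc xc]] := ex k.
    have : c \in [set c in B | f c == k] by rewrite inE cB fc eqxx.
    by rewrite -e inE.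
move=> Q /imsetP [k _ ->]; split; first by apply/subsetP=> c; rewrite inE => /andP [].
apply/and3P; split.
- apply/eqP/setP=> x; rewrite inE; apply/bigcupP.
  have [c] := card1_ex (H k x); rewrite inE => /andP [cB /andP [fc xc]].
  by exists c; rewrite ?inE ?cB.
- apply/trivIsetP=> c1 c2; rewrite !inE => /andP [c1B fc1] /andP [c2B fc2] neq.
  rewrite -setI_eq0; apply/set0Pn=> -[x]; rewrite inE => /andP [x1 x2].
  have e : c1 = c2 by apply: (card1_uniq (H k x)); rewrite inE ?c1B ?c2B ?fc1 ?fc2 ?x1 ?x2.
  by rewrite e eqxx in neq.
- by apply/negP; rewrite inE => /andP [/ne]; rewrite eqxx.
Qed.

Lemma blk_ne (T : finType) (P : {set T}) B b : sts_on P B -> b \in B -> b != set0.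
Proof. by move=> HB bB; rewrite -card_gt0 (blk_card HB bB). Qed.

Lemma part_a (B : {set {set 'I_9}}) : sts_on [set: 'I_9] B -> resolvable B.
Proof.
move=> HB; have c9 : #|[set: 'I_9]| = 9 by rewrite cardsT card_ord.
have [f Hf] := sts9_label HB c9.
have [R _] := res_of_label (f:=f) ord0 (fun b => blk_ne HB) (fun k x => Hf k x (in_setT x)).
by exists [set [set c in B | f c == k] | k : 'I_4].
Qed.
Notation g0 := (@Ordinal 3 0 isT).
Notation g1 := (@Ordinal 3 1 isT).
Notation g2 := (@Ordinal 3 2 isT).

Section PartB.
Variables (B : {set {set 'I_27}}) (G : 'I_3 -> {set 'I_27}).
Hypothesis HB : sts_on [set: 'I_27] B.
Hypothesis HG : forall i, #|G i| = 9.
Hypothesis Hd : forall i j, i != j -> [disjoint G i & G j].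
Hypothesis Ht : forall b, b \in B -> (exists i, b \subset G i) \/ (forall i, #|b :&: G i| = 1).
Variable M : 'I_27 -> 'I_27 -> 'I_9.
Hypothesis HL : latin_on (G g0) (G g1) [set: 'I_9] M.
Hypothesis HO : orthogonal_on (G g0) (G g1) (third B) M.

Lemma Guniq z i j : z \in G i -> z \in G j -> i = j.
Proof.
move=> zi zj; apply/eqP; apply/negPn/negP=> ne.
exact: (disjF (Hd ne) zi zj).
Qed.

Lemma Gneq x y i j : x \in G i -> y \in G j -> i != j -> x != y.
Proof. by move=> xi yj ne; apply/eqP=> e; move: ne; rewrite (Guniq xi (_ : x \in G j)) ?eqxx // e. Qed.

Lemma Gcover z : exists j, z \in G j.
Proof.
case: (boolP (z \in G g0)) => [h|h0]; first by exists g0.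
case: (boolP (z \in G g1)) => [h|h1]; first by exists g1.
case: (boolP (z \in G g2)) => [h|h2]; first by exists g2.
exfalso.
have d01 : [disjoint G g0 & G g1] by apply: Hd.
have d02 : [disjoint G g0 & G g2] by apply: Hd.
have d12 : [disjoint G g1 & G g2] by apply: Hd.
have c01 : #|G g0 :|: G g1| = 18 by rewrite cardsU (disjoint_setI0 d01) cards0 !HG.
have c : #|G g0 :|: G g1 :|: G g2| = 27.
  by rewrite cardsU setIUl (disjoint_setI0 d02) (disjoint_setI0 d12) setU0 cards0 c01 HG.
have sub : G g0 :|: G g1 :|: G g2 \subset [set: 'I_27] :\ z.
  apply/subsetP=> w; rewrite !inE => /orP [/orP [] |] wG; apply/andP; split => //;
  apply/eqP=> e; subst w; by [rewrite wG in h0|rewrite wG in h1|rewrite wG in h2].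
have := subset_leq_card sub; rewrite c.
by have := cardsD1 z [set: 'I_27]; rewrite cardsT card_ord in_setT add1n => -[<-].
Qed.

Definition TD c := forall i, #|c :&: G i| = 1.

Definition pt c i := odflt ord0 [pick x in c :&: G i].

Lemma ptP c i : #|c :&: G i| = 1 -> [/\ pt c i \in c, pt c i \in G i &
  forall w, w \in c -> w \in G i -> w = pt c i].
Proof.
move=> h; have [a e] := cards1P (introT eqP h).
rewrite /pt; case: pickP => [x|]; last by move/(_ a); rewrite e inE eqxx.
rewrite e inE => /eqP -> /=.
have : a \in c :&: G i by rewrite e inE.
rewrite inE => /andP [ac aG]; split=> // w wc wG.
have : w \in c :&: G i by rewrite inE wc wG.
by rewrite e inE => /eqP.
Qed.

Lemma inner_notTD c i : c \in B -> c \subset G i -> ~ TD c.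
Proof.
move=> cB ci htd; have := htd i; rewrite (setIidPl ci) (blk_card HB cB) //.
Qed.

Lemma TD_sub c i : c \in B -> TD c -> ~~ (c \subset G i).
Proof. by move=> cB htd; apply/negP=> ci; apply: (inner_notTD cB ci). Qed.

Lemma blk_inner c i j : c \in B -> c \subset G i -> c \subset G j -> i = j.
Proof.
move=> cB ci cj; have : 0 < #|c| by rewrite (blk_card HB cB).
rewrite card_gt0 => /set0Pn [x xc].
exact: (Guniq (subsetP ci x xc) (subsetP cj x xc)).
Qed.

Lemma td_blk x y : x \in G g0 -> y \in G g1 ->
  let c := blk B x y in
  [/\ c \in B, TD c, pt c g0 = x, pt c g1 = y &
      (third B x y = pt c g2 /\ pt c g2 \in c)].
Proof.
move=> xG yG c.
have xy : x != y by apply: (Gneq xG yG).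
have [cB xc yc] := blkP HB (in_setT x) (in_setT y) xy.
have htd : TD c.
  case: (Ht cB) => // -[i ci].
  have := Guniq xG (subsetP ci x xc); have := Guniq yG (subsetP ci y yc).
  by move=> <-.
have [p0c p0G p0u] := ptP (htd g0).
have [p1c p1G p1u] := ptP (htd g1).
have [p2c p2G p2u] := ptP (htd g2).
have ex : pt c g0 = x by rewrite -(p0u x xc xG).
have ey : pt c g1 = y by rewrite -(p1u y yc yG).
split=> //; split=> //.
set z := pt c g2.
have zx : z != x by apply: (Gneq p2G xG).
have zy : z != y by apply: (Gneq p2G yG).
have incl : forall w, w \in c -> [|| w == x, w == y | w == z].
  move=> w wc; have [j wj] := Gcover w.
  have : j \in [:: g0; g1; g2] by case: j wj => -[|[|[|]]].
  rewrite !inE => /or3P [] /eqP ej; subst j.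
  - by rewrite (p0u w wc wj) ex eqxx.
  - by rewrite (p1u w wc wj) ey eqxx orbT.
  - by rewrite (p2u w wc wj) eqxx !orbT.
have ec : [set x; y; z] = c.
  apply/eqP; rewrite eqEsubset; apply/andP; split; apply/subsetP=> w.
    by rewrite !inE => /orP [/orP [] |] /eqP ->.
  by move/incl; rewrite !inE -orbA.
rewrite /third; case: pickP => [w /and3P [wx wy wB]|]; last first.
  by move/(_ z); rewrite zx zy ec cB.
have : [set x; y; w] = c.
  by apply: (blk_uniq HB xy wB cB); rewrite ?inE ?eqxx ?orbT.
move=> ew; have : w \in c by rewrite -ew !inE eqxx !orbT.
by move/incl; rewrite (negbTE wx) (negbTE wy) /= => /eqP.
Qed.

Lemma td_eq c : c \in B -> TD c -> c = blk B (pt c g0) (pt c g1).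
Proof.
move=> cB htd.
have [p0c p0G _] := ptP (htd g0).
have [p1c p1G _] := ptP (htd g1).
by rewrite (blk_eq HB (Gneq p0G p1G _) cB p0c p1c).
Qed.


Lemma surj9 (A : {set 'I_27}) (g : 'I_27 -> 'I_9) s :
  #|A| = 9 -> {in A &, injective g} -> exists2 y, y \in A & g y = s.
Proof.
move=> cA inj; have : s \in g @: A.
  have -> : g @: A = [set: 'I_9] by apply/eqP; rewrite eqEcard subsetT cardsT card_ord card_in_imset // cA.
  by rewrite in_setT.
by move/imsetP=> [y yA ->]; exists y.
Qed.

Variable F : 'I_3 -> {set 'I_27} -> 'I_4.
Hypothesis HF : forall i k z, z \in G i ->
  #|[set c in [set b in B | b \subset G i] | (F i c == k) && (z \in c)]| = 1.

Definition lab (c : {set 'I_27}) : 'I_13 :=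
  if [pick i | c \subset G i] is Some i then widen_ord (isT : 4 <= 13) (F i c)
  else inord (4 + M (pt c g0) (pt c g1)).

Lemma lab_inner c j : c \in B -> c \subset G j -> val (lab c) = F j c.
Proof.
move=> cB cj; rewrite /lab; case: pickP => [i ci|]; last by move/(_ j); rewrite cj.
by rewrite (blk_inner cB ci cj).
Qed.

Lemma lab_td c : c \in B -> TD c -> val (lab c) = 4 + M (pt c g0) (pt c g1).
Proof.
move=> cB htd; rewrite /lab; case: pickP => [i ci|_].
  by have := TD_sub i cB htd; rewrite ci.
by rewrite /= inordK // -[13]/(4 + 9) ltn_add2l.
Qed.

Lemma lab_card k z : #|[set c in B | (lab c == k) && (z \in c)]| = 1.
Proof.
have [_ _ _ Hrow Hcol] := HL.
have [j zj] := Gcover z.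
case: (ltnP k 4) => k4.
  pose k' : 'I_4 := inord k.
  have ek' : val k' = k by rewrite /= inordK.
  have [c0] := card1_ex (HF k' zj).
  rewrite !inE => /andP [/andP [c0B c0j] /andP [/eqP fc0 zc0]].
  apply: (card1_intro (x:=c0)).
    rewrite inE c0B zc0 andbT; apply/eqP/val_inj; by rewrite (lab_inner c0B c0j) fc0.
  move=> c; rewrite inE => /andP [cB /andP [/eqP lc zc]].
  case: (Ht cB) => [[i ci]|htd]; last first.
    by move: k4; rewrite -lc (lab_td cB htd).
  have eij : i = j by apply: (Guniq (subsetP ci z zc) zj).
  subst i.
  have fc : F j c = k' by apply: val_inj; rewrite ek' -lc (lab_inner cB ci).
  apply: (card1_uniq (HF k' zj)); rewrite !inE ?cB ?ci ?c0B ?c0j ?fc ?fc0 ?zc ?zc0 ?eqxx //.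
pose s : 'I_9 := inord (k - 4).
have es : 4 + s = k by rewrite /= inordK ?subnKC // ltn_subLR // addnC.
have labk : forall c, c \in B -> lab c = k -> TD c /\ M (pt c g0) (pt c g1) = s.
  move=> c cB lc; case: (Ht cB) => [[i ci]|htd].
    by move: k4; rewrite -lc (lab_inner cB ci) leqNgt ltn_ord.
  split=> //; apply: val_inj; apply/eqP; rewrite -(eqn_add2l 4) es -lc lab_td //.
have labk' : forall c, c \in B -> TD c -> M (pt c g0) (pt c g1) = s -> lab c = k.
  by move=> c cB htd e; apply: val_inj; rewrite lab_td // e es.
have : j \in [:: g0; g1; g2] by case: j zj => -[|[|[|]]].
rewrite !inE => /or3P [] /eqP ej; subst j.
-
  have [y yG ey] := surj9 s (HG g1) (Hrow z zj).
  have [c0B c0td p0 p1 _] := td_blk zj yG.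
  apply: (card1_intro (x:=blk B z y)).
    rewrite inE c0B labk' ?p0 ?p1 ?ey ?eqxx //=.
    by have [cB zc yc] := blkP HB (in_setT z) (in_setT y) (Gneq zj yG isT).
  move=> c; rewrite inE => /andP [cB /andP [/eqP lc zc]].
  have [htd e] := labk c cB lc.
  have [_ _ u0] := ptP (htd g0).
  have [q1c q1G _] := ptP (htd g1).
  rewrite -(u0 z zc zj) in e.
  have ey' : pt c g1 = y by apply: (Hrow z zj) => //; rewrite e ey.
  by rewrite (td_eq cB htd) -(u0 z zc zj) ey'.
-
  have [x xG ex] := surj9 s (HG g0) (Hcol z zj).
  have [c0B c0td p0 p1 _] := td_blk xG zj.
  apply: (card1_intro (x:=blk B x z)).
    rewrite inE c0B labk' ?p0 ?p1 ?ex ?eqxx //=.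
    by have [cB xc zc] := blkP HB (in_setT x) (in_setT z) (Gneq xG zj isT).
  move=> c; rewrite inE => /andP [cB /andP [/eqP lc zc]].
  have [htd e] := labk c cB lc.
  have [_ _ u1] := ptP (htd g1).
  have [q0c q0G _] := ptP (htd g0).
  rewrite -(u1 z zc zj) in e.
  have ex' : pt c g0 = x by apply: (Hcol z zj) => //=; rewrite e ex.
  by rewrite (td_eq cB htd) -(u1 z zc zj) ex'.
-
  pose yc x := odflt x [pick y | (y \in G g1) && (M x y == s)].
  have ycP : forall x, x \in G g0 -> yc x \in G g1 /\ M x (yc x) = s.
    move=> x xG; rewrite /yc; case: pickP => [y /andP [yG /eqP e] //|].
    have [y yG ey] := surj9 s (HG g1) (Hrow x xG).
    by move/(_ y); rewrite yG ey eqxx.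
  pose Im := [set third B x (yc x) | x in G g0].
  have ImG : Im \subset G g2.
    apply/subsetP=> w /imsetP [x xG ->]; have [yG _] := ycP x xG.
    have [_ htd _ _ [-> _]] := td_blk xG yG; by have [] := ptP (htd g2).
  have cIm : #|Im| = 9.
    rewrite card_in_imset ?HG // => x1 x2 x1G x2G e.
    have [y1G e1] := ycP x1 x1G; have [y2G e2] := ycP x2 x2G.
    have : (x1, yc x1) = (x2, yc x2).
      apply: HO; rewrite ?inE /= ?x1G ?x2G ?y1G ?y2G //= e e1 e2 //.
    by case.
  have ImE : Im = G g2 by apply/eqP; rewrite eqEcard ImG cIm HG.
  have : z \in Im by rewrite ImE.
  move=> /imsetP [x xG ez].
  have [yG eyx] := ycP x xG.
  have [c0B c0td p0 p1 [et p2c]] := td_blk xG yG.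
  apply: (card1_intro (x:=blk B x (yc x))).
    by rewrite inE c0B labk' ?p0 ?p1 ?eyx ?eqxx //= ez et.
  move=> c; rewrite inE => /andP [cB /andP [/eqP lc zc]].
  have [htd e] := labk c cB lc.
  have [_ _ u2] := ptP (htd g2).
  have [q0c q0G _] := ptP (htd g0).
  have [q1c q1G _] := ptP (htd g1).
  have [_ _ _ _ [et' _]] := td_blk q0G q1G.
  rewrite -(td_eq cB htd) -(u2 z zc zj) in et'.
  have : (pt c g0, pt c g1) = (x, yc x).
    apply: HO; rewrite ?inE /= ?q0G ?q1G ?xG ?yG //= et' e eyx -ez //.
  by case=> e0 e1; rewrite (td_eq cB htd) e0 e1.
Qed.
End PartB.

Theorem proposition3p6 :
  (* (a) *)
  (forall B : {set {set 'I_9}},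
     sts_on [set: 'I_9] B -> rank3 B <= 8 -> resolvable B) /\
  (* (b) *)
  (forall (B : {set {set 'I_27}}) (G : 'I_3 -> {set 'I_27}),
     sts_on [set: 'I_27] B -> rank3 B <= 25 ->
     (forall i, #|G i| = 9) ->
     (forall i j, i != j -> [disjoint G i & G j]) ->
     (forall i, sts_on (G i) [set b in B | b \subset G i]) ->
     (forall b, b \in B ->
        (exists i, b \subset G i) \/ (forall i, #|b :&: G i| = 1)) ->
     (exists M : 'I_27 -> 'I_27 -> 'I_9,  (* orthogonal mate of the TD Latin square: rows G_1, cols G_2, symbols G_3 *)
        latin_on (G (@Ordinal 3 0 isT)) (G (@Ordinal 3 1 isT)) [set: 'I_9] M /\
        orthogonal_on (G (@Ordinal 3 0 isT)) (G (@Ordinal 3 1 isT)) (third B) M) ->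
     exists R, resolution B R /\ #|R| = 13).
Proof.
split; first by move=> B HB _; apply: part_a.
move=> B G HB _ HG Hd Hs Ht [M [HL HO]].
have : forall i, exists f : {set 'I_27} -> 'I_4, forall k z, z \in G i ->
    #|[set c in [set b in B | b \subset G i] | (f c == k) && (z \in c)]| = 1.
  by move=> i; apply: (sts9_label (Hs i) (HG i)).
case/fin_all_exists => F HF.
have [HR cR] := res_of_label ord0 (fun b => blk_ne HB) (lab_card HB HG Hd Ht HL HO HF).
by eexists; split; [exact: HR | exact: cR].
Qed.
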